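(* Let $q\ge3$ be prime and let $T\subseteq\mathbb{F}_q$ have size $\ell\le q-1$. If $2\le\ell\le 2q/3$, then $T$ is $\delta$-mixing for some $\delta\ge\log_q(16/13)$. Otherwise, $T$ is $\delta$-mixing for some $\delta\ge\log_q\left(\frac{\ell^2}{q^2-3\ell(q-\ell)}\right)$.
   Context: For a prime power $q$ and $\delta\ge 0$ (or any real $\delta$), a set $T\subseteq\mathbb{F}_q$ is $\delta$-mixing if for all $\alpha,\beta,\gamma\in\mathbb{F}_q$ with $\alpha,\beta\neq0$, $\Pr[\alpha X+\beta X'\in T+\gamma]\le q^{-\delta}$, where $X,X'$ are independent and uniform on $T$ and $T+\gamma=\{t+\gamma:t\in T\}$. *)

(* Defs.v *)
From HB Require Import structures.
From mathcomp Require Import all_boot all_order all_algebra all_field.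
From mathcomp Require Import all_classical all_reals all_analysis.
Set Implicit Arguments. Unset Strict Implicit. Unset Printing Implicit Defensive.
Import Order.TTheory GRing.Theory Num.Theory.
Local Open Scope ring_scope.

(* Pr[a X + b X' \in T + g] for X, X' independent uniform on T *)
Definition mix_prob (R : realType) (F : finFieldType) (T : {set F})
  (a b g : F) : R :=
  (#|[set xy : F * F | [&& xy.1 \in T, xy.2 \in T &
        a * xy.1 + b * xy.2 \in [set t + g | t in T]]]|)%:R
  / ((#|T| ^ 2)%N)%:R.

Definition delta_mixing (R : realType) (F : finFieldType) (T : {set F})
  (delta : R) : Prop :=
  forall a b g : F, a != 0 -> b != 0 ->
    mix_prob R T a b g <= (#|F|%:R : R) `^ (- delta).

Definition logb (R : realType) (q x : R) : R := ln x / ln q.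

(* Main.v *)
Set Warnings "-all".
Require Import Defs.
From HB Require Import structures.
From mathcomp Require Import all_boot all_order all_algebra all_field.
From mathcomp Require Import all_classical all_reals all_analysis.
From mathcomp Require Import zify ring lra.
Import Order.TTheory GRing.Theory Num.Theory.

Local Open Scope ring_scope.

Section Pollard.
Variable F : finFieldType.

Definition rr (A B : {set F}) (x : F) : nat := #|[set a in A | x - a \in B]|.
Definition SS (t : nat) (A B : {set F}) : nat := (\sum_x minn t (rr A B x))%N.

Lemma card_sep (A : {set F}) (P : pred F) :
  #|[set a in A | P a]| = (\sum_(a in A) (P a : nat))%N.
Proof.
rewrite -sum1_card big_mkcond [RHS]big_mkcond /=; apply: eq_bigr => a _.
by rewrite !inE; case: (a \in A); case: (P a).
Qed.

Lemma sum_inj (g : F -> F) (T : {set F}) : injective g ->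
  (\sum_y (g y \in T : nat))%N = #|T|.
Proof.
move=> ig; rewrite -[RHS](card_preimset T ig) -sum1_card [RHS]big_mkcond /=.
by apply: eq_bigr => y _; rewrite !inE; case: (g y \in T).
Qed.

Lemma rr_le A B x : (rr A B x <= #|B|)%N.
Proof.
have inj : injective (fun a : F => x - a) by move=> a b /= /addrI /oppr_inj.
rewrite /rr -(card_imset _ inj); apply: subset_leq_card.
by apply/fintype.subsetP => y /imsetP[a]; rewrite inE => /andP[_ h] ->.
Qed.

Lemma sum_rr A B : (\sum_x rr A B x)%N = (#|A| * #|B|)%N.
Proof.
under eq_bigr => x _ do rewrite /rr card_sep.
rewrite exchange_big /=.
under eq_bigr => a _ do rewrite (sum_inj (fun x : F => x - a) B (addIr (- a))).
by rewrite sum_nat_const.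
Qed.

Section Transform.
Variables (A B : {set F}) (e : F).
Definition Be := [set b in B | b + e \in A].
Definition De := [set b + e | b in Be].
Definition Ae := A :|: [set b + e | b in B].
Definition A2 := A :\: De.
Definition B2 := B :\: Be.

Lemma card_De : #|De| = #|Be|.
Proof. by rewrite card_imset //; apply: addIr. Qed.

Lemma De_sub : De \subset A.
Proof. by apply/fintype.subsetP => y /imsetP[b]; rewrite inE => /andP[_ h] ->. Qed.

Lemma card_Ae : (#|Ae| + #|Be|)%N = (#|A| + #|B|)%N.
Proof.
have h := cardsUI A [set b + e | b in B].
have E : A :&: [set b + e | b in B] = De.
  apply/finset.setP => z; rewrite !inE; apply/andP/imsetP.
    by case=> zA /imsetP[b bB zE]; exists b => //; rewrite inE bB -zE.
  by case=> b; rewrite inE => /andP[bB bA] ->; split => //; apply: imset_f.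
rewrite E card_De card_imset in h; last by apply: addIr.
by rewrite /Ae h.
Qed.

Lemma card_A2 : (#|A2| + #|Be|)%N = #|A|.
Proof.
by rewrite -card_De addnC /A2 -(cardsID De A) (finset.setIidPr De_sub).
Qed.

Lemma card_B2 : (#|B2| + #|Be|)%N = #|B|.
Proof.
have sub : Be \subset B by apply/fintype.subsetP => b; rewrite inE => /andP[].
by rewrite addnC /B2 -(cardsID Be B) (finset.setIidPr sub).
Qed.

Lemma rr_split x : (rr Ae Be x + rr A2 B2 x <= rr A B x)%N.
Proof.
pose X := [set a in A | x - a \in B].
pose S := [set a | x - a \in Be].
have hX : #|X| = (#|X :&: S| + #|(X :\: S) :&: De| + #|(X :\: S) :\: De|)%N.
  by rewrite -addnA (cardsID De (X :\: S)) cardsID.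
pose Z := [set a in Ae | x - a \in Be].
have hZ : rr Ae Be x = (#|Z :&: A| + #|Z :\: A|)%N by rewrite /rr cardsID.
have h1 : (#|Z :&: A| <= #|X :&: S|)%N.
  apply: subset_leq_card; apply/fintype.subsetP => a; rewrite !inE.
  by case/andP => /and3P[_ h1 h2] aA; rewrite aA h1 h2.
have inj : injective (fun a : F => x - a + e).
  by move=> a b /= /addIr /addrI /oppr_inj.
have h2 : (#|Z :\: A| <= #|(X :\: S) :&: De|)%N.
  rewrite -(card_imset _ inj); apply: subset_leq_card.
  apply/fintype.subsetP => y /imsetP[a aZ ->]; move: aZ.
  rewrite !inE => /andP[aNA /and3P[aAe hb1 hb2]].
  move: aAe; rewrite (negbTE aNA) /= => /imsetP[b bB ab]; subst a.
  have E1 : x - (b + e) + e = x - b by ring.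
  have E2 : x - (x - b) = b by ring.
  rewrite E1 in hb2.
  rewrite E1 E2 hb2 bB (negbTE aNA) /=.
  by apply/imsetP; exists (x - (b + e)) => //; rewrite inE hb1 E1.
have h3 : (rr A2 B2 x <= #|(X :\: S) :\: De|)%N.
  apply: subset_leq_card; apply/fintype.subsetP => a; rewrite !inE.
  by case/andP => /andP[aD aA] /andP[xB xB2]; rewrite aD aA xB xB2.
rewrite hZ; have -> : rr A B x = #|X| by [].
rewrite hX; lia.
Qed.
End Transform.

Hypothesis Hgen : forall d : F, d != 0 -> forall x : F, exists k : nat, x = k%:R * d.

Lemma exists_e (A B : {set F}) : (0 < #|A|)%N -> (1 < #|B|)%N -> (#|A| < #|F|)%N ->
  exists e, (0 < #|Be A B e|)%N && (#|Be A B e| < #|B|)%N.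
Proof.
move=> hA hB hAF.
case: (boolP [exists e, (0 < #|Be A B e|)%N && (#|Be A B e| < #|B|)%N]).
  by move/existsP.
move/existsPn => H.
case/card_gt0P: hA => a0 a0A.
case/card_gt1P: hB => b1 [b2 [b1B b2B b12]].
have closed : forall a, a \in A -> a + (b2 - b1) \in A.
  move=> a aA.
  have hb1 : b1 \in Be A B (a - b1).
    by rewrite inE b1B /=; have -> : b1 + (a - b1) = a by ring.
  have sub : Be A B (a - b1) \subset B.
    by apply/fintype.subsetP => b; rewrite inE => /andP[].
  have eqB : Be A B (a - b1) = B.
    apply/eqP; rewrite eqEcard sub /=.
    have hpos : (0 < #|Be A B (a - b1)%R|)%N by apply/card_gt0P; exists b1.
    by move: (H (a - b1)); rewrite hpos /= -leqNgt.
  move: b2B; rewrite -eqB inE => /andP[_].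
  by have -> : b2 + (a - b1) = a + (b2 - b1) by ring.
have iter : forall k : nat, a0 + k%:R * (b2 - b1) \in A.
  elim=> [|k IH]; first by rewrite mul0r addr0.
  by rewrite mulrSr mulrDl mul1r addrA closed.
have d0 : b2 - b1 != 0 by rewrite subr_eq0 eq_sym.
have allA : A = [set: F].
  apply/finset.setP => x; rewrite inE.
  case: (@Hgen _ d0 (x - a0)) => k hk.
  have hx : x = a0 + k%:R * (b2 - b1) by rewrite -hk addrC subrK.
  by rewrite hx iter.
by move: hAF; rewrite allA cardsT ltnn.
Qed.

Lemma pollard n : forall (B A : {set F}) (t : nat),
  (#|B| <= n)%N -> (t <= #|A|)%N -> (t <= #|B|)%N -> (#|A| + #|B| <= #|F| + t)%N ->
  (t * (#|A| + #|B| - t) <= SS t A B)%N.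
Proof.
elim: n => [|n IH] B A t hBn htA htB hs.
  have -> : t = 0%N by lia.
  by rewrite mul0n.
case: (posnP t) => [->|t0]; first by rewrite mul0n.
case: (leqP #|B| t) => hBt.
  have eBt : #|B| = t by lia.
  rewrite /SS.
  under eq_bigr => x _ do rewrite (minn_idPr (leq_trans (rr_le A B x) hBt)).
  rewrite sum_rr eBt; lia.
have hAF : (#|A| < #|F|)%N by lia.
have [e /andP[s0 sB]] := exists_e A B (leq_trans t0 htA) (leq_ltn_trans t0 hBt) hAF.
have cAe := card_Ae A B e.
have cA2 := card_A2 A B e.
have cB2 := card_B2 A B e.
case: (leqP t #|Be A B e|) => hts.
  have ih := IH (Be A B e) (Ae A B e) t ltac:(lia) ltac:(lia) hts ltac:(lia).
  have -> : (#|A| + #|B| = #|Ae A B e| + #|Be A B e|)%N by lia.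
  apply: (leq_trans ih); apply: leq_sum => x _.
  have := rr_split A B e x; lia.
have ih := IH (B2 A B e) (A2 A B e) (t - #|Be A B e|)%N ltac:(lia) ltac:(lia) ltac:(lia) ltac:(lia).
have key : (\sum_x (rr (Ae A B e) (Be A B e) x + minn (t - #|Be A B e|)%N (rr (A2 A B e) (B2 A B e) x))
   <= SS t A B)%N.
  apply: leq_sum => x _.
  have := rr_split A B e x; have := rr_le (Ae A B e) (Be A B e) x; lia.
rewrite big_split /= sum_rr in key.
rewrite /SS in ih.
move: key ih cAe cA2 cB2 hts htA htB.
set SA := SS t A B; set X := (\sum_x _)%N.
move: #|A| #|B| #|Ae A B e| #|A2 A B e| #|B2 A B e| #|Be A B e| => a b ae a2 b2 s.
move=> key ih cAe cA2 cB2 hts htA htB.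
nia.
Qed.
End Pollard.
Arguments rr {F}. Arguments SS {F}. Arguments sum_rr {F}. Arguments sum_inj {F}.
Arguments rr_le {F}.

Lemma count_bound (F : finFieldType)
  (Hgen : forall d : F, d != 0 -> forall x : F, exists k : nat, x = k%:R * d)
  (A B C : {set F}) (l t : nat) :
  #|A| = l -> #|B| = l -> #|C| = l -> (t <= l)%N -> (2 * l <= #|F| + t)%N ->
  (\sum_(c in C) rr A B c + t * (l - t) <= l * l)%N.
Proof.
move=> hA hB hC htl hF.
have P := @pollard F Hgen #|B| B A t (leqnn _) ltac:(lia) ltac:(lia) ltac:(lia).
rewrite /SS (bigID (fun c => c \in C)) /= in P.
have h1 : (\sum_(c in C) minn t (rr A B c) <= \sum_(c in C) t)%N.
  by apply: leq_sum => c _; apply: geq_minl.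
rewrite sum_nat_const hC in h1.
have h2 : (\sum_(c | c \notin C) minn t (rr A B c) <= \sum_(c | c \notin C) rr A B c)%N.
  by apply: leq_sum => c _; apply: geq_minr.
have h3 := sum_rr A B; rewrite (bigID (fun c => c \in C)) /= in h3.
rewrite hA hB in P h3.
move: P h1 h2 h3.
set a1 := (\sum_(c in C) minn t _)%N.
set a2 := (\sum_(c | c \notin C) minn t _)%N.
set b1 := (\sum_(c in C) rr A B c)%N.
set b2 := (\sum_(c | c \notin C) rr A B c)%N.
move=> P h1 h2 h3.
nia.
Qed.

Lemma card_setP (G : finType) (P : pred G) : #|[set x | P x]| = (\sum_x (P x : nat))%N.
Proof.
rewrite -sum1_card [LHS]big_mkcond /=; apply: eq_bigr => x _.
by rewrite !inE; case: (P x).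
Qed.

Lemma sum_pair (G : finType) (f : G * G -> nat) :
  (\sum_p f p = \sum_x \sum_y f (x, y))%N.
Proof. by rewrite pair_bigA; apply: eq_bigr => -[x y] _. Qed.

Lemma memC (F : finFieldType) (T : {set F}) (g z : F) :
  (z \in [set t + g | t in T]) = (z - g \in T).
Proof.
apply/imsetP/idP.
  by case=> t tT ->; rewrite addrK.
by move=> h; exists (z - g) => //; rewrite subrK.
Qed.

Section Main.
Variables (F : finFieldType) (T : {set F}) (al be ga : F).
Hypotheses (al0 : al != 0) (be0 : be != 0).

Definition NN := #|[set xy : F * F | [&& xy.1 \in T, xy.2 \in T &
        al * xy.1 + be * xy.2 \in [set t + ga | t in T]]]|.

Lemma rr_eq c : rr [set al * x | x in T] [set be * y | y in T] c =
  #|[set xy : F * F | [&& xy.1 \in T, xy.2 \in T & al * xy.1 + be * xy.2 == c]]|.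
Proof.
set Q := [set xy : F * F | _].
have inj : {in Q &, injective (fun xy : F * F => al * xy.1)}.
  move=> [x1 y1] [x2 y2]; rewrite /Q !inE /= => /and3P[_ _ /eqP h1] /and3P[_ _ /eqP h2] hx.
  have ex : x1 = x2 := mulfI al0 hx.
  subst x2; have : be * y1 = be * y2 by apply: (@addrI _ (al * x1)); rewrite h1 h2.
  by move/(mulfI be0) ->.
rewrite /rr -(card_in_imset inj).
suff -> : [set a in [set al * x | x in T] | c - a \in [set be * y | y in T]] =
  [set al * xy.1 | xy in Q] by [].
apply/finset.setP => a; rewrite inE; apply/andP/imsetP.
  case=> /imsetP[x xT ->] /imsetP[y yT hy]; exists (x, y) => //.
  by rewrite inE /= xT yT /= -hy; apply/eqP; ring.
case=> -[x y]; rewrite inE /= => /and3P[xT yT /eqP h] ->; split.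
  by apply: imset_f.
by apply/imsetP; exists y => //; rewrite -h; ring.
Qed.

Lemma NN_rr : NN = (\sum_(c in [set (t + ga)%R | t in T])
   rr [set (al * x)%R | x in T] [set (be * y)%R | y in T] c)%N.
Proof.
under [RHS]eq_bigr => c _ do rewrite rr_eq card_setP.
rewrite exchange_big /= /NN card_setP; apply: eq_bigr => xy _.
set f := al * xy.1 + be * xy.2.
case hf : (f \in [set t + ga | t in T]).
  rewrite (bigD1 f) //= eqxx big1 ?addn0 ?andbT //.
  by move=> c /andP[_ cf]; rewrite eq_sym (negbTE cf) !andbF.
rewrite !andbF /=; symmetry; apply: big1 => c cC.
case: (boolP (f == c)) => [/eqP fc|]; last by rewrite !andbF.
by rewrite -fc hf in cC.
Qed.

Lemma sum_and (b : bool) (P : pred F) :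
  (\sum_y ((b && P y) : nat) = b * \sum_y (P y : nat))%N.
Proof.
case: b; first by rewrite mul1n.
by rewrite mul0n big1.
Qed.

Lemma sum_cond_const (c : nat) : (\sum_x ((x \in T) * c) = #|T| * c)%N.
Proof.
rewrite -sum_nat_const [RHS]big_mkcond; apply: eq_bigr => x _.
by case: (x \in T); rewrite ?mul1n ?mul0n.
Qed.

Lemma case2_count : (NN + 3 * #|T| * #|F| <= #|F| * #|F| + 3 * (#|T| * #|T|))%N.
Proof.
have injw : forall x, injective (fun y => al * x + be * y - ga).
  by move=> x y1 y2 /= /addIr /addrI /(mulfI be0).
have injw' : forall y, injective (fun x => al * x + be * y - ga).
  by move=> y x1 x2 /= /addIr /addIr /(mulfI al0).
have pt : forall x y : F,
  ((x \in T) && ((y \in T) && ((al * x + be * y - ga)%R \in T)) + (x \in T) + (y \in T)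
    + ((al * x + be * y - ga)%R \in T)
   <= 1 + ((x \in T) && (y \in T)) + ((x \in T) && ((al * x + be * y - ga)%R \in T))
    + ((y \in T) && ((al * x + be * y - ga)%R \in T)))%N.
  by move=> x y; case: (x \in T); case: (y \in T); case: (_ - ga \in T).
pose w x y := ((al * x + be * y - ga)%R \in T).
have Ex : forall x,
  (\sum_y ((x \in T) && ((y \in T) && w x y) : nat) + (x \in T) * #|F| + #|T| + #|T|
   <= #|F| + (x \in T) * #|T| + (x \in T) * #|T| + \sum_y ((y \in T) && w x y : nat))%N.
  move=> x.
  have H : (\sum_y ((x \in T) && ((y \in T) && w x y) + (x \in T) + (y \in T) + w x y)
     <= \sum_y (1 + ((x \in T) && (y \in T)) + ((x \in T) && w x y) + ((y \in T) && w x y)))%N.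
    by apply: leq_sum => y _; apply: pt.
  rewrite !big_split /= in H.
  have e1 : (\sum_(y : F) (x \in T : nat) = #|F| * (x \in T))%N by rewrite sum_nat_const.
  have e2 : (\sum_(y : F) 1 = #|F| * 1)%N by rewrite sum_nat_const.
  have e3 : (\sum_(y : F) (y \in T : nat) = #|T|)%N by rewrite (sum_inj (fun y => y) T (fun a b (h : a = b) => h)).
  have e4 : (\sum_(y : F) (w x y : nat) = #|T|)%N by rewrite /w (sum_inj _ T (injw x)).
  have e5 : (\sum_(y : F) ((x \in T) && (y \in T) : nat) = (x \in T) * #|T|)%N by rewrite sum_and e3.
  have e6 : (\sum_(y : F) ((x \in T) && w x y : nat) = (x \in T) * #|T|)%N by rewrite sum_and e4.
  rewrite e1 e2 e3 e4 e5 e6 in H.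
  by move: H; rewrite muln1 [(#|F| * _)%N]mulnC.
have S : (\sum_x (\sum_y ((x \in T) && ((y \in T) && w x y) : nat) + (x \in T) * #|F| + #|T| + #|T|)
   <= \sum_x (#|F| + (x \in T) * #|T| + (x \in T) * #|T| + \sum_y ((y \in T) && w x y : nat)))%N.
  by apply: leq_sum => x _; apply: Ex.
rewrite !big_split /= !sum_cond_const !sum_nat_const in S.
have e7 : (\sum_(x : F) \sum_(y : F) ((y \in T) && w x y : nat) = #|T| * #|T|)%N.
  rewrite exchange_big /=.
  under eq_bigr => y _ do rewrite sum_and /w (sum_inj _ T (injw' y)).
  by rewrite sum_cond_const.
rewrite e7 in S.
have cF : #|(xpredT : pred F)| = #|F| by [].
rewrite cF in S.
rewrite /NN card_setP sum_pair.
under eq_bigr => x _ do under eq_bigr => y _ do rewrite memC.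
rewrite /w in S.
rewrite /=.
move: S; set Z := (\sum_i _)%N.
set f := #|F|. set t := #|T|. clearbody f t Z.
nia.
Qed.
End Main.
Arguments NN {F}. Arguments NN_rr {F}. Arguments case2_count {F}.

Lemma Hgen_Fp (q : nat) (Hq : prime q) :
  forall d : 'F_q, d != 0 -> forall x : 'F_q, exists k : nat, x = k%:R * d.
Proof.
move=> d d0 x; exists (nat_of_ord (x / d)).
by rewrite natr_Zp divfK.
Qed.

Lemma powR_logb (R : realType) (q : nat) (c : R) : (1 < q)%N -> 0 < c ->
  (q%:R : R) `^ (- logb (q%:R) c) = c^-1.
Proof.
move=> q1 c0.
have q0 : (q%:R : R) != 0 by rewrite pnatr_eq0; case: q q1.
have lq : ln (q%:R : R) != 0.
  by apply/lt0r_neq0/ln_gt0; rewrite ltr1n.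
by rewrite /powR (negbTE q0) /logb mulNr divfK // expRN lnK // posrE.
Qed.

Theorem corollary3p3 (R : realType) (q : nat) (Hq : prime q) (Hq3 : (3 <= q)%N)
  (T : {set 'F_q}) (HT : (1 <= #|T| <= q - 1)%N) :
  let l := #|T| in
  ((2 <= l)%N /\ (3 * l <= 2 * q)%N ->
     exists delta : R, logb (q%:R) (16 / 13) <= delta /\ delta_mixing T delta) /\
  (~ ((2 <= l)%N /\ (3 * l <= 2 * q)%N) ->
     exists delta : R,
       logb (q%:R) ((l%:R ^+ 2) / (q%:R ^+ 2 - 3 * l%:R * (q%:R - l%:R)))
         <= delta /\ delta_mixing T delta).
Proof.
move=> l.
have cF : #|'F_q| = q := card_Fp Hq.
have Hgen := @Hgen_Fp q Hq.
have q1 : (1 < q)%N by lia.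
have l1 : (1 <= l)%N by case/andP: HT.
have mixE : forall a b g, mix_prob R T a b g = (NN T a b g)%:R / ((l ^ 2)%N)%:R by [].
split.
  case=> l2 l3.
  exists (logb q%:R (16 / 13)); split => // a b g a0 b0.
  rewrite cF powR_logb // mixE invf_div.
  have key : (NN T a b g * 16 <= 13 * l ^ 2)%N.
    rewrite (NN_rr T a b g a0 b0).
    have cA : #|[set (a * x)%R | x in T]| = l by rewrite card_imset //; apply: mulfI.
    have cB : #|[set (b * x)%R | x in T]| = l by rewrite card_imset //; apply: mulfI.
    have cC : #|[set (x + g)%R | x in T]| = l by rewrite card_imset //; apply: addIr.
    have hl : l = (odd l + l./2 + l./2)%N by rewrite -addnA addnn odd_double_half.
    have ho : (odd l <= 1)%N by case: (odd l).
    have := @count_bound _ Hgen _ _ _ l l./2 cA cB cC ltac:(lia) ltac:(rewrite cF; lia).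
    move: (\sum_(c in _) _)%N => S.
    move: (odd l) l./2 hl ho => o t hl ho.
    rewrite hl; nia.
  have lpos : (0 : R) < (l ^ 2)%N%:R by rewrite ltr0n expn_gt0 l1.
  rewrite ler_pdivrMr //.
  have : ((NN T a b g * 16)%:R <= (13 * l ^ 2)%:R :> R) by rewrite ler_nat.
  rewrite !natrM; move: (NN T a b g)%:R ((l ^ 2)%N)%:R lpos => x y yp h.
  lra.
move=> _.
set D : R := (q%:R ^+ 2 - 3 * l%:R * (q%:R - l%:R)).
have lR : (1 : R) <= l%:R by rewrite ler1n.
have Dpos : 0 < D.
  rewrite /D; have := sqr_ge0 (2 * (q%:R : R) - 3 * l%:R); nra.
have cpos : 0 < l%:R ^+ 2 / D by apply: divr_gt0 => //; apply: exprn_gt0; lra.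
exists (logb q%:R (l%:R ^+ 2 / D)); split => // a b g a0 b0.
rewrite cF powR_logb // mixE invf_div.
have lpos : (0 : R) < (l ^ 2)%N%:R by rewrite ltr0n expn_gt0 l1.
rewrite natrX in lpos *.
rewrite ler_pdivrMr // divfK; last by rewrite lt0r_neq0.
have := case2_count T a b g a0 b0; rewrite cF => h.
have : ((NN T a b g + 3 * l * q)%:R <= (q * q + 3 * (l * l))%:R :> R) by rewrite ler_nat.
rewrite !natrD !natrM /D; move: (NN T a b g)%:R => x hx.
nra.
Qed.
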